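(* Let $G$ be a graph with $n$ nodes and graph Laplacian $\mathbf{L}$. Then a matrix $\mathbf{P}\in\mathbb{R}^{n\times d}$ is node- and adjacency-identifying if there exist matrices $\mathbf{W}^Q,\mathbf{W}^K\in\mathbb{R}^{d\times d}$ such that $$\frac{1}{\sqrt{d_k}}(\mathbf{P}\mathbf{W}^Q)(\mathbf{P}\mathbf{W}^K)^T=\mathbf{L}.$$
   Context: Graphs are finite, undirected, without self-loops and without isolated nodes; $\mathbf{L}=\mathbf{D}-\mathbf{A}(G)$ with $\mathbf{D}$ the degree matrix and $\mathbf{A}(G)$ the adjacency matrix; $d_k>0$ is a fixed constant. For $\mathbf{W}^Q,\mathbf{W}^K$ put $\tilde{\mathbf{P}}=\frac{1}{\sqrt{d_k}}\mathbf{P}\mathbf{W}^Q(\mathbf{P}\mathbf{W}^K)^T$. $\mathbf{P}$ is node-identifying if for some $\mathbf{W}^Q,\mathbf{W}^K$: $\tilde{\mathbf{P}}_{ij}=\max_k\tilde{\mathbf{P}}_{ik}\iff i=j$; adjacency-identifying if for some (possibly different) $\mathbf{W}^Q,\mathbf{W}^K$: $\tilde{\mathbf{P}}_{ij}=\max_k\tilde{\mathbf{P}}_{ik}\iff\mathbf{A}(G)_{ij}=1$. *)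

(* Defs.v *)
From HB Require Import structures.
From mathcomp Require Import all_boot all_order all_algebra.
From mathcomp Require Import reals.
Set Implicit Arguments. Unset Strict Implicit. Unset Printing Implicit Defensive.
Import Order.TTheory GRing.Theory Num.Theory.
Local Open Scope ring_scope.

Definition simple_graph_no_isolated (n : nat) (e : rel 'I_n) : Prop :=
  [/\ symmetric e, irreflexive e & forall i : 'I_n, exists j, e i j].

Definition adjmx (R : realType) (n : nat) (e : rel 'I_n) : 'M[R]_n :=
  \matrix_(i, j) (e i j)%:R.

Definition degmx (R : realType) (n : nat) (e : rel 'I_n) : 'M[R]_n :=
  \matrix_(i, j) (if i == j then (#|[set k | e i k]|)%:R else 0).

Definition laplacian (R : realType) (n : nat) (e : rel 'I_n) : 'M[R]_n :=
  degmx R e - adjmx R e.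

Definition Ptilde (R : realType) (n d : nat) (dk : R)
  (P : 'M[R]_(n, d)) (WQ WK : 'M[R]_d) : 'M[R]_n :=
  (Num.sqrt dk)^-1 *: ((P *m WQ) *m (P *m WK)^T).

Definition is_row_max (R : realType) (n : nat) (M : 'M[R]_n) (i j : 'I_n) : Prop :=
  forall k : 'I_n, M i k <= M i j.

Definition node_identifying (R : realType) (n d : nat) (dk : R)
  (P : 'M[R]_(n, d)) : Prop :=
  exists WQ WK : 'M[R]_d, forall i j : 'I_n,
    is_row_max (Ptilde dk P WQ WK) i j <-> i = j.

Definition adjacency_identifying (R : realType) (n d : nat) (dk : R)
  (e : rel 'I_n) (P : 'M[R]_(n, d)) : Prop :=
  exists WQ WK : 'M[R]_d, forall i j : 'I_n,
    is_row_max (Ptilde dk P WQ WK) i j <-> adjmx R e i j = 1.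

(* Main.v *)
Require Import Defs.
From HB Require Import structures.
From mathcomp Require Import all_boot all_order all_algebra.
From mathcomp Require Import reals.
From mathcomp Require Import lra.
Import Order.TTheory GRing.Theory Num.Theory.
Local Open Scope ring_scope.

Theorem lemmaF6 (R : realType) (n d : nat) (dk : R) (hdk : 0 < dk)
  (e : rel 'I_n) (hG : simple_graph_no_isolated e) (P : 'M[R]_(n, d)) :
  (exists WQ WK : 'M[R]_d, Ptilde dk P WQ WK = laplacian R e) ->
  node_identifying dk P /\ adjacency_identifying dk e P.
Proof.
case=> WQ [WK HP]; case: hG => esym eirr enb.
have HL : forall i j, laplacian R e i j =
  if i == j then (#|[set k | e i k]|)%:R else - (e i j)%:R.
  move=> i j; rewrite /laplacian !mxE.
  case: eqP => [->|_]; last by rewrite sub0r.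
  by rewrite eirr subr0.
have Hdeg : forall i, 1 <= (#|[set k | e i k]|)%:R :> R.
  move=> i; rewrite ler1n card_gt0; apply/set0Pn.
  by case: (enb i) => j hj; exists j; rewrite inE.
have Hb0 : forall b : bool, 0 <= b%:R :> R by case.
have Hb1 : forall b : bool, b%:R <= 1 :> R by case.
split.
  exists WQ, WK => i j; rewrite HP /is_row_max; split.
    move=> H; apply/eqP; apply/negPn/negP => hij.
    have := H i; rewrite !HL eqxx (negbTE hij) => H2.
    have := le_trans (Hdeg i) H2.
    by rewrite lerNr => /(le_trans (Hb0 _)); rewrite oppr_ge0 ler10.
  move=> <- k; rewrite !HL eqxx; case: eqP => _ //.
  apply: le_trans (ler0n _ _); rewrite oppr_le0; exact: Hb0.
exists (- WQ), WK => i j.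
have HN : forall k, Ptilde dk P (- WQ) WK i k = - laplacian R e i k.
  by move=> k; rewrite -HP /Ptilde mulmxN mulNmx scalerN mxE.
have -> : adjmx R e i j = (e i j)%:R by rewrite mxE.
rewrite /is_row_max.
split.
  move=> H; case: (enb i) => j0 hj0.
  have := H j0; rewrite !HN !HL.
  have -> : (i == j0) = false by apply/negbTE; apply/eqP => h; move: hj0; rewrite h eirr.
  rewrite hj0 opprK; case: (i =P j) => _.
    by rewrite ?mulr1n => h; have := Hdeg i; lra.
  by rewrite opprK; case: (e i j) => //=; rewrite ?mulr0n ?mulr1n => h; lra.
move=> hij.
have hb : e i j by move: hij; case: (e i j) => //= /eqP; rewrite eq_sym oner_eq0.
have hne : (i == j) = false by apply/negbTE; apply/eqP => h; move: hb; rewrite h eirr.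
move=> k; rewrite !HN !HL; rewrite hne.
rewrite hb opprK; case: (i =P k) => _.
  by apply: (@le_trans _ _ 0); rewrite ?oppr_le0 ?ler0n ?ler01.
by rewrite opprK; exact: Hb1.
Qed.
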